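(* Let $\alpha\in\mathbb C$ and let $u(k),v(k),f(k),g(k)$, $k\ge0$, be defined by $u(0)=v(0)=0$, $f(0)=g(0)=1$ and, for $k\ge1$, $u(k)=u(k-1)+f(k-1)$, $v(k)=v(k-1)+g(k-1)$, $f(k)=\frac{u(k)}{v(k)}g(k-1)$, $g(k)=\frac{\alpha v(k)}{k-\alpha u(k)/f(k-1)-\alpha v(k)/g(k-1)}$. Put $h(k)=(f(k)g(k))^{-1}$ and $w(0)=0$, $w(k)=w(k-1)+h(k-1)$ for $k\ge1$. Then, for all $k$ such that the arguments are nonnegative integers, $$w(3k-1)=\frac{k-1+2\alpha}{1-2\alpha}\Pi_3(k),\quad w(3k)=\frac{k}{1-2\alpha}\Pi_3(k),\quad w(3k+1)=\frac{k+1-2\alpha}{1-2\alpha}\Pi_3(k),$$ $$h(3k-1)=h(3k)=\Pi_3(k),\qquad h(3k+1)=\frac{k+1-2\alpha}{k+\alpha}\Pi_3(k),$$ where $$\Pi_3(k)=\frac{(1-\alpha)(2-\alpha)\cdots(k-\alpha)}{\alpha(1+\alpha)\cdots(k-1+\alpha)}\cdot\frac{(1-2\alpha)(2-2\alpha)\cdots(k-2\alpha)}{2\alpha(1+2\alpha)\cdots(k-1+2\alpha)}.$$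
   Context: Empty products equal $1$ (so $\Pi_3(0)=1$). The parameter $\alpha$ is such that all denominators occurring are nonzero. *)

(* Defs.v *)
From HB Require Import structures.
From mathcomp Require Import all_boot all_order all_algebra.
Set Implicit Arguments. Unset Strict Implicit. Unset Printing Implicit Defensive.
Import Order.TTheory GRing.Theory Num.Theory.
Local Open Scope ring_scope.

(* Scalars: any numeric algebraically closed field C (e.g. the complex numbers). *)
Section Seqs.
Variable C : numClosedFieldType.
Variable a : C.

Fixpoint ufvg (k : nat) : C * C * C * C :=
  match k with
  | 0 => (0, 0, 1, 1)
  | k'.+1 =>
      let: (u, v, f, g) := ufvg k' in
      let u' := u + f in
      let v' := v + g in
      let f' := u' / v' * g in
      let g' := a * v' / (k'.+1%:R - a * u' / f - a * v' / g) in
      (u', v', f', g')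
  end.

Definition useq k := (ufvg k).1.1.1.
Definition vseq k := (ufvg k).1.1.2.
Definition fseq k := (ufvg k).1.2.
Definition gseq k := (ufvg k).2.

Definition hseq k := (fseq k * gseq k)^-1.

Fixpoint wseq (k : nat) : C :=
  match k with 0 => 0 | k'.+1 => wseq k' + hseq k' end.

Definition Pi3 (k : nat) : C :=
  (\prod_(i < k) (i.+1%:R - a)) / (\prod_(i < k) (a + i%:R)) *
  ((\prod_(i < k) (i.+1%:R - 2 * a)) / (\prod_(i < k) (2 * a + i%:R))).
End Seqs.

(* Main.v *)
Require Import Defs.
From HB Require Import structures.
From mathcomp Require Import all_boot all_order all_algebra.
From mathcomp Require Import ring.
Import Order.TTheory GRing.Theory Num.Theory.
Local Open Scope ring_scope.

Ltac fld := field; repeat (apply/andP; split).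

Section Proof.
Variable C : numClosedFieldType.
Variable a : C.

Lemma ufvgS k : ufvg a k.+1 =
  (useq a k + fseq a k, vseq a k + gseq a k,
   (useq a k + fseq a k) / (vseq a k + gseq a k) * gseq a k,
   a * (vseq a k + gseq a k) /
     (k.+1%:R - a * (useq a k + fseq a k) / fseq a k - a * (vseq a k + gseq a k) / gseq a k)).
Proof. rewrite /useq /vseq /fseq /gseq /=. by case: (ufvg a k) => [[[u v] f] g]. Qed.

Lemma useqS k : useq a k.+1 = useq a k + fseq a k.
Proof. by rewrite {1}/useq ufvgS. Qed.
Lemma vseqS k : vseq a k.+1 = vseq a k + gseq a k.
Proof. by rewrite {1}/vseq ufvgS. Qed.
Lemma fseqS k : fseq a k.+1 = useq a k.+1 / vseq a k.+1 * gseq a k.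
Proof. by rewrite {1}/fseq ufvgS useqS vseqS. Qed.
Lemma gseqS k : gseq a k.+1 = a * vseq a k.+1 /
   (k.+1%:R - a * useq a k.+1 / fseq a k - a * vseq a k.+1 / gseq a k).
Proof. by rewrite {1}/gseq ufvgS useqS vseqS. Qed.

Hypothesis hf : forall k, fseq a k != 0.
Hypothesis hg : forall k, gseq a k != 0.
Hypothesis hD : forall k, (0 < k)%N ->
          k%:R - a * useq a k / fseq a k.-1 - a * vseq a k / gseq a k.-1 != 0.
Hypothesis ha : forall j : nat, a + j%:R != 0.

Hypothesis h2a : forall j : nat, 2 * a + j%:R != 0.

Lemma a0 : a != 0. Proof. by have := ha 0; rewrite addr0. Qed.

Lemma step k f g : fseq a (3*k) = f -> gseq a (3*k) = g ->
  useq a (3*k) = k%:R * f / a -> vseq a (3*k) = k%:R * g / a ->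
  [/\ k%:R + 1 - 2 * a != 0, k%:R + 1 - a != 0,
      fseq a (3*k).+1 = f /\ gseq a (3*k).+1 = g * (k%:R + a) / (k%:R + 1 - 2 * a),
      fseq a (3*k).+2 = f * (k%:R + 2 * a) / (k%:R + 1 - a) /\
        gseq a (3*k).+2 = g * (k%:R + a) / (k%:R + 1 - 2 * a) &
      [/\ fseq a (3*k).+3 = f * (k%:R + 2 * a) / (k%:R + 1 - a),
          gseq a (3*k).+3 = g * (k%:R + a) / (k%:R + 1 - 2 * a),
          useq a (3*k).+3 = (k.+1)%:R * fseq a (3*k).+3 / a &
          vseq a (3*k).+3 = (k.+1)%:R * gseq a (3*k).+3 / a]].
Proof.
move=> Ef Eg hu hv.
have f0 : f != 0 by rewrite -Ef; apply: hf.
have g0 : g != 0 by rewrite -Eg; apply: hg.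
have a0 := a0.
have ka : k%:R + a != 0 by rewrite addrC; apply: ha.
have u1 : useq a (3*k).+1 = (k%:R + a) * f / a by rewrite useqS hu Ef; fld.
have v1 : vseq a (3*k).+1 = (k%:R + a) * g / a by rewrite vseqS hv Eg; fld.
have D1 : (3*k).+1%:R - a * useq a (3*k).+1 / f
             - a * vseq a (3*k).+1 / g = k%:R + 1 - 2 * a.
  by rewrite u1 v1; fld.
have n1 : k%:R + 1 - 2 * a != 0 by have := hD (3*k).+1 isT; rewrite [(3*k).+1.-1]/= Ef Eg D1.
have f1 : fseq a (3*k).+1 = f by rewrite fseqS u1 v1 Eg; fld.
have g1 : gseq a (3*k).+1 = g * (k%:R + a) / (k%:R + 1 - 2 * a).
  by rewrite gseqS Ef Eg D1 v1; fld.
have g1n : gseq a (3*k).+1 != 0 by apply: hg.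
have u2 : useq a (3*k).+2 = (k%:R + 2 * a) * f / a by rewrite useqS u1 f1; fld.
have v2 : vseq a (3*k).+2 = g * (k%:R + a) * (k%:R + 1 - a) / (a * (k%:R + 1 - 2 * a)).
  by rewrite vseqS v1 g1; fld.
have D2 : (3*k).+2%:R - a * useq a (3*k).+2 / fseq a (3*k).+1
             - a * vseq a (3*k).+2 / gseq a (3*k).+1 = k%:R + 1 - a.
  by rewrite u2 v2 f1 g1; fld.
have n2 : k%:R + 1 - a != 0 by have := hD (3*k).+2 isT; rewrite [(3*k).+2.-1]/= D2.
have f2 : fseq a (3*k).+2 = f * (k%:R + 2 * a) / (k%:R + 1 - a).
  by rewrite fseqS u2 v2 g1; fld.
have g2 : gseq a (3*k).+2 = g * (k%:R + a) / (k%:R + 1 - 2 * a).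
  by rewrite gseqS D2 v2; fld.
have k2 : k%:R + 2 * a != 0 by rewrite addrC; apply: h2a.
have u3 : useq a (3*k).+3 = (k.+1)%:R * (f * (k%:R + 2 * a) / (k%:R + 1 - a)) / a.
  by rewrite useqS u2 f2; fld.
have v3 : vseq a (3*k).+3 = (k.+1)%:R * (g * (k%:R + a) / (k%:R + 1 - 2 * a)) / a.
  by rewrite vseqS v2 g2; fld.
have k1 : (k.+1)%:R != 0 :> C by rewrite pnatr_eq0.
have k1' : 1 + k%:R != 0 :> C by rewrite -natr1 addrC in k1.
have f3 : fseq a (3*k).+3 = f * (k%:R + 2 * a) / (k%:R + 1 - a).
  by rewrite fseqS u3 v3 g2; fld.
have D3 : (3*k).+3%:R - a * useq a (3*k).+3 / fseq a (3*k).+2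
             - a * vseq a (3*k).+3 / gseq a (3*k).+2 = (k.+1)%:R.
  by rewrite u3 v3 f2 g2; fld.
have g3 : gseq a (3*k).+3 = g * (k%:R + a) / (k%:R + 1 - 2 * a).
  by rewrite gseqS D3 v3; fld.
split => //.
by split => //; rewrite ?u3 ?v3 ?f3 ?g3.
Qed.
Lemma m3S k : (3 * k.+1 = (3 * k).+3)%N.
Proof. exact: (etrans (mulnSr 3 k) (addnC _ _)). Qed.

Lemma inv k : useq a (3*k) = k%:R * fseq a (3*k) / a /\ vseq a (3*k) = k%:R * gseq a (3*k) / a.
Proof.
elim: k => [|k [IH1 IH2]]; first by rewrite !mul0r.
have [_ _ _ _ [_ _ ]] := @step k _ _ erefl erefl IH1 IH2.
by rewrite m3S.
Qed.

Definition facts k := @step k _ _ erefl erefl (inv k).1 (inv k).2.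

Lemma Pi3S k : Pi3 a k.+1 = Pi3 a k * ((k.+1%:R - a) / (a + k%:R)) * ((k.+1%:R - 2 * a) / (2 * a + k%:R)).
Proof. rewrite /Pi3 !big_ord_recr /= !invfM. ring. Qed.

Lemma hP k : hseq a (3 * k) = Pi3 a k.
Proof.
elim: k => [|k IH]; first by rewrite /Pi3 !big_ord0 /hseq /fseq /gseq /= !(invr1, mul1r).
have [n1 n2 _ _ [f3 g3 _ _]] := facts k.
have := hf (3*k); have := hg (3*k).
rewrite m3S Pi3S -IH /hseq f3 g3.
move: (fseq a (3*k)) (gseq a (3*k)) => F G G0 F0.
have a0 := a0.
have ka : k%:R + a != 0 by rewrite addrC; apply: ha.
have k2 : k%:R + 2 * a != 0 by rewrite addrC; apply: h2a.
have ka' : a + k%:R != 0 by apply: ha.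
have k2' : 2 * a + k%:R != 0 by apply: h2a.
by fld.
Qed.
Lemma wS k : wseq a k.+1 = wseq a k + hseq a k.
Proof. by []. Qed.

Lemma hs k : hseq a (3*k).+1 = (k%:R + 1 - 2 * a) / (k%:R + a) * Pi3 a k /\ hseq a (3*k).+2 = Pi3 a k.+1.
Proof.
have [n1 n2 [f1 g1] [f2 g2] [f3 g3 _ _]] := facts k.
split; last by rewrite -hP m3S /hseq f2 g2 f3 g3.
rewrite -hP /hseq f1 g1.
have := hf (3*k); have := hg (3*k).
move: (fseq a (3*k)) (gseq a (3*k)) => F G G0 F0.
have a0 := a0.
have ka : k%:R + a != 0 by rewrite addrC; apply: ha.
by fld.
Qed.

Hypothesis h12 : 1 - 2 * a != 0.

Lemma wP k : wseq a (3*k) = k%:R / (1 - 2 * a) * Pi3 a k.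
Proof.
elim: k => [|k IH]; first by rewrite mul0r mul0r.
have [h1 h2] := hs k.
rewrite m3S !wS IH h1 h2 hP Pi3S.
move: (Pi3 a k) => P.
have ka : k%:R + a != 0 by rewrite addrC; apply: ha.
have k2 : k%:R + 2 * a != 0 by rewrite addrC; apply: h2a.
have ka' : a + k%:R != 0 by apply: ha.
have k2' : 2 * a + k%:R != 0 by apply: h2a.
by fld.
Qed.

Lemma main k :
    [/\ ((0 < k)%N ->
          wseq a (3 * k).-1 = (k%:R - 1 + 2 * a) / (1 - 2 * a) * Pi3 a k),
        wseq a (3 * k) = k%:R / (1 - 2 * a) * Pi3 a k &
        wseq a (3 * k).+1 = (k%:R + 1 - 2 * a) / (1 - 2 * a) * Pi3 a k] /\
    [/\ ((0 < k)%N -> hseq a (3 * k).-1 = Pi3 a k),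
        hseq a (3 * k) = Pi3 a k &
        hseq a (3 * k).+1 = (k%:R + 1 - 2 * a) / (k%:R + a) * Pi3 a k].
Proof.
have [h1 h2] := hs k.
split; split.
- case: k {h1 h2} => [//|k] _.
  have [_ h2] := hs k.
  have := wP k.+1.
  rewrite m3S -[((3*k).+3).-1]/((3*k).+2) wS => E.
  have -> : wseq a (3*k).+2 = k.+1%:R / (1 - 2 * a) * Pi3 a k.+1 - hseq a (3*k).+2.
    by rewrite -E addrK.
  rewrite h2; move: (Pi3 a k.+1) => P; by fld.
- exact: wP.
- by rewrite wS wP hP; fld.
- case: k {h1 h2} => [//|k] _.
  have [_ h2] := hs k.
  by rewrite m3S -[((3*k).+3).-1]/((3*k).+2) h2.
- exact: hP.
- exact: h1.
Qed.

End Proof.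
Theorem corollary24 (C : numClosedFieldType) (a : C)
  (* all denominators occurring in the recursions are nonzero *)
  (hv : forall k, (0 < k)%N -> vseq a k != 0)
  (hf : forall k, fseq a k != 0)
  (hg : forall k, gseq a k != 0)
  (hD : forall k, (0 < k)%N ->
          k%:R - a * useq a k / fseq a k.-1 - a * vseq a k / gseq a k.-1 != 0)
  (* all denominators occurring in the closed formulas are nonzero *)
  (h12 : 1 - 2 * a != 0)
  (ha : forall j : nat, a + j%:R != 0)
  (h2a : forall j : nat, 2 * a + j%:R != 0) :
  forall k : nat,
    [/\ ((0 < k)%N ->
          wseq a (3 * k).-1 = (k%:R - 1 + 2 * a) / (1 - 2 * a) * Pi3 a k),
        wseq a (3 * k) = k%:R / (1 - 2 * a) * Pi3 a k &
        wseq a (3 * k).+1 = (k%:R + 1 - 2 * a) / (1 - 2 * a) * Pi3 a k] /\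
    [/\ ((0 < k)%N -> hseq a (3 * k).-1 = Pi3 a k),
        hseq a (3 * k) = Pi3 a k &
        hseq a (3 * k).+1 = (k%:R + 1 - 2 * a) / (k%:R + a) * Pi3 a k].
Proof.
Proof. move=> k; apply: main => //. Qed.
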